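(* Let $X,Y$ be $T_0$ spaces and $f:X\to Y$ a continuous map. The following are equivalent: (1) $f$ is continuous as a map from $(X,\mathcal{O}_{SI_2}(X))$ to $(Y,\mathcal{O}_{SI_2}(Y))$. (2) For every net $(x_i)_{i\in I}$ in $X$ and $x\in X$, if $(x_i)_{i\in I}$ $GSI_2$-converges to $x$ in $X$, then $(f(x_i))_{i\in I}$ $GSI_2$-converges to $f(x)$ in $Y$.
   Context: For a $T_0$ space $X$, the specialization order is $x\le y$ iff $x\in \mathrm{cl}\{y\}$; $\uparrow A=\{x: a\le x\text{ for some } a\in A\}$, $\uparrow x=\uparrow\{x\}$; $A^\uparrow$, $A^\downarrow$ are the sets of upper and lower bounds of $A$, and $A^\delta=(A^\uparrow)^\downarrow$. A nonempty $A\subseteq X$ is irreducible if whenever $A\subseteq F_1\cup F_2$ with $F_1,F_2$ closed, $A\subseteq F_1$ or $A\subseteq F_2$. $X^{(<\omega)}$ is the set of nonempty finite subsets of $X$. $P_S(X)$ is the set of nonempty compact saturated (upper) subsets of $X$ with the upper Vietoris topology, basis $\{\square U: U\text{ open}\}$, $\square U=\{Q: Q\subseteq U\}$. A net is eventually in $U$ if from some index on all its terms lie in $U$. $U\subseteq X$ is $SI_2$-open if $U$ is open and for every irreducible $F$, $F^\delta\cap U\ne\emptyset$ implies $F\cap U\neq\emptyset$; these form the topology $\mathcal{O}_{SI_2}(X)$. A net $(x_i)_{i\in I}$ $GSI_2$-converges to $x$ in $X$ if there exists $\mathcal F\subseteq X^{(<\omega)}$ with $\{\uparrow F: F\in\mathcal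 F\}$ irreducible in $P_S(X)$ such that (i) for every open $U$ of $X$, if $\uparrow F\subseteq U$ for some $F\in\mathcal F$ then $x_i\in U$ eventually, and (ii) $\bigcap_{F\in\mathcal F}\uparrow F\subseteq\uparrow x$. *)

(* Defs.v *)
From HB Require Import structures.
From mathcomp Require Import all_boot all_order.
From mathcomp Require Import all_classical all_reals all_analysis.
Set Implicit Arguments. Unset Strict Implicit. Unset Printing Implicit Defensive.
Local Open Scope classical_set_scope.

Section Defs.
Context {X : topologicalType}.

Definition spec_le (x y : X) : Prop := closure [set y] x.

Definition upset (A : set X) : set X := [set x | exists2 a, A a & spec_le a x].
Definition upper_bounds (A : set X) : set X := [set y | forall a, A a -> spec_le a y].
Definition lower_bounds (A : set X) : set X := [set y | forall a, A a -> spec_le y a].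
Definition delta (A : set X) : set X := lower_bounds (upper_bounds A).

Definition irreducible (A : set X) : Prop :=
  A !=set0 /\ forall F1 F2 : set X, closed F1 -> closed F2 ->
    A `<=` F1 `|` F2 -> A `<=` F1 \/ A `<=` F2.

Definition saturated (A : set X) : Prop := forall x y, A x -> spec_le x y -> A y.

Definition PS (Q : set X) : Prop := Q !=set0 /\ compact Q /\ saturated Q.

Definition box (U : set X) : set (set X) := [set Q | PS Q /\ Q `<=` U].

(* open sets of the upper Vietoris topology on P_S(X) (subsets of P_S(X)):
   unions of basic opens box U, U open *)
Definition UV_open (W : set (set X)) : Prop :=
  W `<=` PS /\ forall Q, W Q -> exists2 U, open U & box U Q /\ box U `<=` W.

Definition UV_closed (C : set (set X)) : Prop :=
  C `<=` PS /\ UV_open (PS `\` C).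

Definition UV_irreducible (A : set (set X)) : Prop :=
  A `<=` PS /\ A !=set0 /\ forall C1 C2, UV_closed C1 -> UV_closed C2 ->
    A `<=` C1 `|` C2 -> A `<=` C1 \/ A `<=` C2.

Definition SI2_open (U : set X) : Prop :=
  open U /\ forall F, irreducible F -> delta F `&` U !=set0 -> F `&` U !=set0.

Definition directed {I : Type} (le : I -> I -> Prop) : Prop :=
  (forall i, le i i) /\ (forall i j k, le i j -> le j k -> le i k) /\
  inhabited I /\ (forall i j, exists k, le i k /\ le j k).

Definition eventually_in {I : Type} (le : I -> I -> Prop) (s : I -> X) (U : set X) :=
  exists i0, forall i, le i0 i -> U (s i).

Definition fin_nonempty (F : set X) : Prop := finite_set F /\ F !=set0.

Definition GSI2_converges {I : Type} (le : I -> I -> Prop) (s : I -> X) (x : X) : Prop :=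
  exists FF : set (set X),
    FF `<=` fin_nonempty /\
    UV_irreducible (upset @` FF) /\
    (forall U : set X, open U -> (exists2 F, FF F & upset F `<=` U) ->
        eventually_in le s U) /\
    \bigcap_(F in FF) upset F `<=` upset [set x].

End Defs.

Definition SI2_continuous {X Y : topologicalType} (f : X -> Y) : Prop :=
  forall V : set Y, SI2_open V -> SI2_open (f @^-1` V).

(* Main.v *)
Require Import Defs.
From mathcomp Require Import all_boot all_order.
From mathcomp Require Import all_classical all_reals all_analysis.
Local Open Scope classical_set_scope.

Section Basics.
Context {X : topologicalType}.
Implicit Types (x y : X) (A U C : set X).

Lemma spec_leP x y : spec_le x y <-> forall U, open U -> U x -> U y.
Proof.
split.
- move=> h U oU Ux.
  have /h [z [/= -> Uz]] // : nbhs x U by apply: open_nbhs_nbhs.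
- move=> h B; rewrite nbhsE => -[U [oU Ux] UB]; exists y; split => //.
  by apply: UB; apply: h.
Qed.

Lemma spec_refl x : spec_le x x.
Proof. by rewrite spec_leP. Qed.

Lemma spec_trans x y z : spec_le x y -> spec_le y z -> spec_le x z.
Proof. rewrite !spec_leP => h1 h2 U oU Ux; apply: h2 => //; exact: h1. Qed.

Lemma open_up U x y : open U -> U x -> spec_le x y -> U y.
Proof. by move=> oU Ux /spec_leP h; apply: h. Qed.

Lemma closed_down C x y : closed C -> C y -> spec_le x y -> C x.
Proof.
move=> cC Cy xy; apply: contrapT => nCx.
have := @open_up (~` C) x y; rewrite openC => /(_ cC nCx xy); exact.
Qed.

Lemma compact_upset1 x : compact (upset [set x]).
Proof.
move=> F PF Fu; exists x; split; first by exists x => //; exact: spec_refl.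
move=> A B FA; rewrite nbhsE => -[U [oU Ux] UB].
have : F (A `&` upset [set x]) by apply: filterI.
move=> /filter_ex [z [Az [a /= -> az]]]; exists z; split => //.
by apply: UB; apply: open_up az.
Qed.

Lemma upset_seq (s : seq X) : compact (upset [set` s]).
Proof.
elim: s => [|a s IH].
  have -> : upset [set` [::]] = set0 :> set X.
    by apply/seteqP; split => z // [b].
  exact: compact0.
have -> : upset [set` (a :: s)] = upset [set a] `|` upset [set` s].
  apply/seteqP; split => z.
    move=> [b /=]; rewrite inE => /orP[/eqP ->|bs] bz.
      by left; exists a.
    by right; exists b.
  move=> [[b /= -> bz]|[b /= bs bz]].
    by exists a => //=; rewrite in_cons eqxx.
  by exists b => //=; rewrite in_cons bs orbT.
by apply: compactU; [exact: compact_upset1|exact: IH].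
Qed.

Lemma upset_sat A : saturated (upset A).
Proof. by move=> a b [c Ac ca] ab; exists c => //; apply: spec_trans ab. Qed.

Lemma upset_PS (F : set X) : fin_nonempty F -> PS (upset F).
Proof.
move=> [/finite_seqP [s ->] [a Fa]]; split; last split.
- by exists a, a => //; exact: spec_refl.
- exact: upset_seq.
- exact: upset_sat.
Qed.


Lemma UV_closed_meet (D : set X) : closed D ->
  UV_closed [set K : set X | PS K /\ K `&` D !=set0].
Proof.
move=> cD; split; first by move=> K [].
split; first by move=> K [].
move=> K [PK nK]; exists (~` D); first by rewrite openC.
split.
  by split => // z Kz Dz; apply: nK; split => //; exists z.
move=> Q [PQ QD]; split => // -[_ [z [Qz Dz]]]; exact: (QD z Qz Dz).
Qed.

Lemma rudin (FF : set (set X)) (C : set X) :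
  FF `<=` fin_nonempty -> UV_irreducible (upset @` FF) -> closed C ->
  (forall F, FF F -> F `&` C !=set0) ->
  exists A, irreducible A /\ A `<=` C /\ forall F, FF F -> F `&` A !=set0.
Proof.
move=> FFfin [FFPS [FFne FFirr]] cC FFC.
pose P := [set U : set X | open U /\ forall F, FF F -> F `&` (C `&` ~` U) !=set0].
have chain : forall G : set (set X), G `<=` P -> total_on G subset ->
    P (\bigcup_(V in G) V).
  move=> G GP Gtot; split.
    by apply: bigcup_open => V /GP [].
  move=> F FFF; apply: contrapT => hne.
  have [/finite_seqP [s Fs] _] := FFfin F FFF.
  have key : forall t : seq X, [set` t] `<=` F ->
      exists2 U, (G U \/ U = set0) & [set` t] `&` C `<=` U.
    elim => [|a t IH] tF.
      by exists set0; [right|move=> z [] /=].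
    have [|U1 hU1 tU1] := IH.
      by move=> z zt; apply: tF => /=; rewrite in_cons zt orbT.
    have Fa : F a by apply: tF => /=; rewrite in_cons eqxx.
    have [Ca|nCa] := pselect (C a); last first.
      exists U1 => // z [/=]; rewrite in_cons => /orP[/eqP ->|zt] Cz //.
      exact: tU1.
    have [U2 GU2 U2a] : (\bigcup_(V in G) V) a.
      apply: contrapT => na; apply: hne; exists a; split => //.
    have sub1 : forall W, U1 `<=` W -> U2 `<=` W ->
        [set` (a :: t)] `&` C `<=` W.
      move=> W h1 h2 z [/=]; rewrite in_cons => /orP[/eqP ->|zt] Cz.
        exact: h2.
      by apply: h1; apply: tU1.
    case: hU1 => [GU1|U10].
      have [h|h] := Gtot _ _ GU1 GU2.
        by exists U2; [left|apply: sub1].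
      by exists U1; [left|apply: sub1].
    by exists U2; [left|apply: sub1 => //; rewrite U10].
  have sF : [set` s] `<=` F by rewrite Fs.
  have [U hU FCU] := key s sF.
  case: hU => [GU|U0].
    have [_ h] := GP _ GU.
    have [z [Fz [Cz nUz]]] := h F FFF.
    by apply: nUz; apply: FCU; split => //; rewrite -Fs.
  have [z [Fz Cz]] := FFC F FFF.
  by rewrite U0 in FCU; apply: (FCU z); split => //; rewrite -Fs.
have [U [[oU PU] Umax]] := Zorn_bigcup chain.
pose A := C `&` ~` U.
have cA : closed A by apply: closedI => //; rewrite closedC.
exists A; split; last split.
- split.
    have [_ [F FFF _]] := FFne.
    by have [z [_ Az]] := PU F FFF; exists z.
  move=> F1 F2 cF1 cF2 AF12; apply: contrapT => hno.
  have hA1 : ~ A `<=` F1 by move=> h; apply: hno; left.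
  have hA2 : ~ A `<=` F2 by move=> h; apply: hno; right.
  have getF : forall Fi, closed Fi -> ~ A `<=` Fi ->
      exists2 F, FF F & ~ (F `&` (A `&` Fi) !=set0).
    move=> Fi cFi nAFi.
    have [a Aa nFia] : exists2 a, A a & ~ Fi a.
      apply: contrapT => h; apply: nAFi => z Az.
      by apply: contrapT => nz; apply: h; exists z.
    have prop : U `<` U `|` ~` Fi.
      split; first by move=> z Uz; left.
      by move=> h; have := h a (or_intror nFia); case: Aa.
    have nP := Umax _ prop.
    apply: contrapT => hF; apply: nP; split.
      by apply: openU => //; rewrite openC.
    move=> F FFF; apply: contrapT => hne; apply: hF; exists F => //.
    move=> [z [Fz [[Cz nUz] Fiz]]]; apply: hne; exists z; split => //.
    by split => //; move=> [//|]; apply.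
  have [G1 FFG1 nG1] := getF F1 cF1 hA1.
  have [G2 FFG2 nG2] := getF F2 cF2 hA2.
  have cl1 := @UV_closed_meet (A `&` F1) (closedI cA cF1).
  have cl2 := @UV_closed_meet (A `&` F2) (closedI cA cF2).
  have cov : upset @` FF `<=`
      [set K | PS K /\ K `&` (A `&` F1) !=set0] `|`
      [set K | PS K /\ K `&` (A `&` F2) !=set0].
    move=> _ [F FFF <-].
    have PSF : PS (upset F) by apply: FFPS; exists F.
    have [a [Fa Aa]] := PU F FFF.
    have Fa' : upset F a by exists a => //; exact: spec_refl.
    have [h|h] := AF12 a Aa.
      by left; split => //; exists a.
    by right; split => //; exists a.
  have bad : forall G Fi, closed Fi -> FF G -> ~ (G `&` (A `&` Fi) !=set0) ->
      ~ (upset @` FF `<=` [set K | PS K /\ K `&` (A `&` Fi) !=set0]).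
    move=> G Fi cFi FFG nG h.
    have [_ [b [[c Gc cb] [Ab Fib]]]] := h (upset G) (ex_intro2 _ _ G FFG erefl).
    apply: nG; exists c; split => //.
    exact: (@closed_down (A `&` Fi) c b (closedI cA cFi) (conj Ab Fib) cb).
  have [h|h] := FFirr _ _ cl1 cl2 cov.
    exact: (bad G1 F1 cF1 FFG1 nG1 h).
  exact: (bad G2 F2 cF2 FFG2 nG2 h).
- by move=> z [].
- by move=> F FFF; apply: PU.
Qed.


Lemma key_SI2 (FF : set (set X)) (V : set X) y :
  SI2_open V -> FF `<=` fin_nonempty -> UV_irreducible (upset @` FF) ->
  \bigcap_(F in FF) upset F `<=` upset [set y] -> V y ->
  exists2 F, FF F & upset F `<=` V.
Proof.
move=> [oV hV] FFfin FFirr hcap Vy; apply: contrapT => hno.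
have cC : closed (~` V) by rewrite closedC.
have FC : forall F, FF F -> F `&` ~` V !=set0.
  move=> F FFF; apply: contrapT => hne; apply: hno; exists F => // z [a Fa az].
  apply: (@open_up V a z oV _ az); apply: contrapT => nVa; apply: hne; exists a; split => //.
have [A [irrA [AC AF]]] := @rudin FF (~` V) FFfin FFirr cC FC.
have dA : delta A y.
  move=> u ub.
  have : upset [set y] u.
    apply: hcap => F FFF; have [a [Fa Aa]] := AF F FFF.
    by exists a => //; exact: ub.
  by move=> [b /= ->].
have [z [Az Vz]] := hV A irrA (ex_intro _ y (conj dA Vy)).
exact: AC Az Vz.
Qed.

End Basics.

Lemma spec_cont (X Y : topologicalType) (f : X -> Y) (a b : X) :
  continuous f -> spec_le a b -> spec_le (f a) (f b).
Proof.
move=> fc /spec_leP h; apply/spec_leP => W oW Wfa.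
have : open (f @^-1` W) by apply: open_comp => // z _; exact: fc.
by move=> o; exact: (h _ o Wfa).
Qed.

Theorem proposition3p9 (X Y : topologicalType) (f : X -> Y) :
  kolmogorov_space X -> kolmogorov_space Y -> continuous f ->
  (SI2_continuous f <->
   (forall (I : Type) (le : I -> I -> Prop) (s : I -> X) (x : X),
      directed le -> GSI2_converges le s x ->
      GSI2_converges le (fun i => f (s i)) (f x))).
Proof.
move=> _ _ fc; split.
- move=> hSI I le s x dir [FF [FFfin [FFirr [Hi Hii]]]].
  have finF' : forall F, FF F -> fin_nonempty (f @` F).
    move=> F FFF; have [fin [a Fa]] := FFfin F FFF.
    by split; [exact: finite_image | exists (f a), a].
  have FFPS := FFirr.1.
  exists [set f @` F | F in FF]; split; [|split; [|split]].
  + by move=> _ [F FFF <-]; exact: finF'.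
  + split.
      by move=> _ [_ [F FFF <-] <-]; apply: upset_PS; exact: finF'.
    split.
      have [_ [F FFF _]] := FFirr.2.1.
      by exists (upset (f @` F)); exists (f @` F) => //; exists F.
    move=> C1 C2 cl1 cl2 cov.
    pose O (C' : set (set Y)) := [set K : set X | PS K /\
      exists2 W, open W & f @` K `<=` W /\ box W `<=` PS `\` C'].
    pose D C' := [set K : set X | PS K /\ ~ O C' K].
    have Dcl : forall C', UV_closed (D C').
      move=> C'; split; first by move=> K [].
      split; first by move=> K [].
      move=> K [PK nD].
      have [_ [W oW [fKW boxW]]] : O C' K.
        by apply: contrapT => hn; apply: nD; split.
      exists (f @^-1` W); first by apply: open_comp => // z _; exact: fc.
      split.
        by split => // z Kz; apply: fKW; exists z.
      move=> Q [PQ QW]; split => // -[_ hO]; apply: hO; split => //.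
      by exists W => //; split => // _ [z Qz <-]; exact: QW.
    have cov' : upset @` FF `<=` D C1 `|` D C2.
      move=> _ [F FFF <-].
      have PF : PS (upset F) by apply: FFPS; exists F.
      have PQ : PS (upset (f @` F)) by apply: upset_PS; exact: finF'.
      have hc : (C1 `|` C2) (upset (f @` F)).
        by apply: cov; exists (f @` F) => //; exists F.
      have gen : forall C', C' (upset (f @` F)) -> D C' (upset F).
        move=> C' hC'; split => // -[_ [W oW [fKW boxW]]].
        have : (PS `\` C') (upset (f @` F)).
          apply: boxW; split => // z [_ [a Fa <-] az].
          apply: (@open_up _ W (f a) z oW _ az); apply: fKW; exists a => //.
          by exists a => //; exact: spec_refl.
        by case=> _; apply.
      by case: hc => h; [left|right]; apply: gen.
    have back : forall C', UV_closed C' -> upset @` FF `<=` D C' ->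
        upset @` [set f @` F | F in FF] `<=` C'.
      move=> C' [_ [_ hop]] hD _ [_ [F FFF <-] <-]; apply: contrapT => nC.
      have PQ : PS (upset (f @` F)) by apply: upset_PS; exact: finF'.
      have [W oW [[_ QW] boxW]] := hop _ (conj PQ nC).
      have [_ nO] := hD (upset F) (ex_intro2 _ _ F FFF erefl).
      apply: nO; split; first by apply: FFPS; exists F.
      exists W => //; split => // _ [b [a Fa ab] <-].
      apply: (@open_up _ W (f a) (f b) oW _ (@spec_cont _ _ f a b fc ab)); apply: QW.
      by exists (f a); [exists a | exact: spec_refl].
    have [h|h] := FFirr.2.2 _ _ (Dcl C1) (Dcl C2) cov'.
      by left; apply: back.
    by right; apply: back.
  + move=> V oV [_ [F FFF <-] FV].
    have : eventually_in le s (f @^-1` V).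
      apply: Hi; first by apply: open_comp => // z _; exact: fc.
      exists F => // b [a Fa ab].
      apply: (@open_up _ V (f a) (f b) oV _ (@spec_cont _ _ f a b fc ab)); apply: FV.
      by exists (f a); [exists a | exact: spec_refl].
    by move=> [i0 hi0]; exists i0.
  + move=> y hy; apply: contrapT => ny.
    pose V := ~` closure [set y].
    have SV : SI2_open V.
      split; first by rewrite openC; exact: closed_closure.
      move=> G irrG [z [dz Vz]]; apply: contrapT => hne; apply: Vz; apply: (dz y).
      move=> a Ga; apply: contrapT => na; apply: hne; exists a; split => //.
    have Vfx : V (f x) by move=> h; apply: ny; exists (f x).
    have [F FFF FV] := @key_SI2 _ FF (f @^-1` V) x (hSI V SV) FFfin FFirr Hii Vfx.
    have [_ [a Fa <-] ay] := hy (f @` F) (ex_intro2 _ _ F FFF erefl).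
    have : (f @^-1` V) a by apply: FV; exists a => //; exact: spec_refl.
    by apply.
- move=> h V [oV hV]; split; first by apply: open_comp => // z _; exact: fc.
  move=> A irrA [x [dx Vfx]].
  have [Ane Airr] := irrA.
  pose I := {U : set X | open U /\ A `&` U !=set0}.
  pose le (i j : I) := sval j `<=` sval i.
  pose s (i : I) := projT1 (cid (proj2 (proj2_sig i))).
  have sP : forall i, (A `&` sval i) (s i).
    by move=> i; exact: (projT2 (cid (proj2 (proj2_sig i)))).
  have dir : directed le.
    split; first by move=> i z.
    split; first by move=> i j k hij hjk z kz; apply: hij; apply: hjk.
    split.
      have [a Aa] := Ane.
      by constructor; exists setT; split; [exact: openT | exists a].
    move=> [U [oU mU]] [U' [oU' mU']].
    have m : A `&` (U `&` U') !=set0.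
      apply: contrapT => hne.
      have cov : A `<=` ~` U `|` ~` U'.
        move=> a Aa; apply: contrapT => na; apply: hne; exists a; split => //.
        by split; apply: contrapT => nu; apply: na; [left|right].
      have cU : closed (~` U) by rewrite closedC.
      have cU' : closed (~` U') by rewrite closedC.
      have [hA|hA] := Airr _ _ cU cU' cov.
        by have [a [Aa Ua]] := mU; exact: hA a Aa Ua.
      by have [a [Aa Ua]] := mU'; exact: hA a Aa Ua.
    exists (exist _ (U `&` U') (conj (openI oU oU') m)).
    by split => z [].
  have conv : GSI2_converges le s x.
    exists [set [set a] | a in A]; split; [|split; [|split]].
    + by move=> _ [a Aa <-]; split; [exact: finite_set1 | exists a].
    + split.
        move=> _ [_ [a _ <-] <-]; apply: upset_PS.
        by split; [exact: finite_set1 | exists a].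
      split.
        have [a Aa] := Ane.
        by exists (upset [set a]), [set a] => //; exists a.
      move=> C1 C2 cl1 cl2 cov.
      have Bcl : forall C' : set (set X), UV_closed C' -> closed [set a | C' (upset [set a])].
        move=> C' [_ [_ hop]]; rewrite -openC openE /= => a na.
        have PSa : PS (upset [set a]).
          by apply: upset_PS; split; [exact: finite_set1 | exists a].
        have [U oU [[_ aU] bU]] := hop _ (conj PSa na).
        have Ua : U a by apply: aU; exists a => //; exact: spec_refl.
        apply: (filterS _ (open_nbhs_nbhs (conj oU Ua))) => b Ub.
        have PSb : PS (upset [set b]).
          by apply: upset_PS; split; [exact: finite_set1 | exists b].
        have sub : upset [set b] `<=` U.
          by move=> z [c /= -> cz]; exact: (@open_up _ U b z oU Ub cz).
        by have [_] := bU (upset [set b]) (conj PSb sub).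
      have covA : A `<=` [set a | C1 (upset [set a])] `|` [set a | C2 (upset [set a])].
        move=> a Aa.
        have := cov (upset [set a]) (ex_intro2 _ _ [set a] (ex_intro2 _ _ a Aa erefl) erefl).
        by case=> hc; [left|right].
      have [hA|hA] := Airr _ _ (Bcl C1 cl1) (Bcl C2 cl2) covA.
        by left => _ [_ [a Aa <-] <-]; exact: hA a Aa.
      by right => _ [_ [a Aa <-] <-]; exact: hA a Aa.
    + move=> U oU [_ [a Aa <-] aU].
      have Ua : U a by apply: aU; exists a => //; exact: spec_refl.
      exists (exist _ U (conj oU (ex_intro _ a (conj Aa Ua)))).
      by move=> i hi; apply: hi; exact: (sP i).2.
    + move=> y hy; exists x => //; apply: dx => a Aa.
      have [b /= -> ay] := hy [set a] (ex_intro2 _ _ a Aa erefl).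
      exact: ay.
  have [FF' [FF'fin [FF'irr [Hi Hii]]]] := h I le s x dir conv.
  have [F FFF FV] := @key_SI2 _ FF' V (f x) (conj oV hV) FF'fin FF'irr Hii Vfx.
  have [i0 hi0] := Hi V oV (ex_intro2 _ _ F FFF FV).
  exists (s i0); split; first exact: (sP i0).1.
  exact: hi0 i0 (dir.1 i0).
Qed.
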